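(* An indexed preorder $\mathcal{A}$ is equivalent (in the locally ordered category of indexed preorders and pseudonatural transformations) to $\mathsf{fam}(A,R)$ for some discrete combinatory object $(A,R)$ if and only if $\mathcal{A}$ has a discrete generic predicate.
   Context: An indexed preorder is a pseudofunctor $\mathcal{A}:\mathsf{Set}^{op}\to\mathsf{Ord}$, with $u^*=\mathcal{A}(u)$. A generic predicate is some $\iota\in\mathcal{A}(C)$ such that every $\varphi\in\mathcal{A}(B)$ is isomorphic to $f^*\iota$ for some $f:B\to C$. A predicate $\delta\in\mathcal{A}(I)$ is discrete if for every surjection $e:K\to J$, function $f:K\to I$ and $\varphi\in\mathcal{A}(J)$ with $e^*\varphi\le f^*\delta$, there exists a $g:J\to I$ with $g\circ e=f$. A uniform preorder is a pair $(A,R)$ with $A$ a set and $R\subseteq P(A\times A)$ such that $\mathrm{id}_A\in R$, $s\circ r\in R$ whenever $r,s\in R$, and $s\in R$ whenever $r\in R$ and $s\subseteq r$; it is a discrete combinatory object (DCO) if all $r\in R$ are single-valued (partial functions). $\mathsf{fam}(A,R)$ is the indexed preorder $I\mapsto(A^I,\le)$ with $\varphi\le\psi$ iff $\{(\varphi i,\psi i)\mid i\in I\}\in R$, reindexing by precomposition. *)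

(* Defs.v *)
(* "Set" (the category of sets) is modelled by Rocq types
   (a fixed universe); functions between sets are Rocq functions. *)

(** Since Ord is locally
    preordered, coherence axioms are vacuous; pseudofunctoriality amounts to
    id^* ≅ id and (v∘u)^* ≅ u^* v^* pointwise (≅ = ≤ both ways). *)
Record IndexedPreorder := {
  ip_car : Type -> Type;
  ip_le : forall I : Type, ip_car I -> ip_car I -> Prop;
  ip_refl : forall I (x : ip_car I), ip_le I x x;
  ip_trans : forall I (x y z : ip_car I), ip_le I x y -> ip_le I y z -> ip_le I x z;
  ip_re : forall (I J : Type), (I -> J) -> ip_car J -> ip_car I;
  ip_re_mono : forall I J (u : I -> J) (x y : ip_car J),
      ip_le J x y -> ip_le I (ip_re I J u x) (ip_re I J u y);
  ip_re_id : forall I (x : ip_car I),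
      ip_le I (ip_re I I (fun i => i) x) x /\ ip_le I x (ip_re I I (fun i => i) x);
  ip_re_comp : forall I J K (u : I -> J) (v : J -> K) (x : ip_car K),
      ip_le I (ip_re I K (fun i => v (u i)) x) (ip_re I J u (ip_re J K v x)) /\
      ip_le I (ip_re I J u (ip_re J K v x)) (ip_re I K (fun i => v (u i)) x)
}.

Definition ip_iso (A : IndexedPreorder) (I : Type) (x y : ip_car A I) : Prop :=
  ip_le A I x y /\ ip_le A I y x.

(** Pseudonatural transformation (coherence vacuous in Ord). *)
Record PseudoNat (A B : IndexedPreorder) := {
  pn_map : forall I, ip_car A I -> ip_car B I;
  pn_mono : forall I (x y : ip_car A I), ip_le A I x y -> ip_le B I (pn_map I x) (pn_map I y);
  pn_nat : forall I J (u : I -> J) (x : ip_car A J),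
      ip_iso B I (pn_map I (ip_re A I J u x)) (ip_re B I J u (pn_map J x))
}.
Arguments pn_map {A B}.

Definition ip_equivalent (A B : IndexedPreorder) : Prop :=
  exists (F : PseudoNat A B) (G : PseudoNat B A),
    (forall I (x : ip_car A I), ip_iso A I (pn_map G I (pn_map F I x)) x) /\
    (forall I (y : ip_car B I), ip_iso B I (pn_map F I (pn_map G I y)) y).

Definition generic (A : IndexedPreorder) (C : Type) (iota : ip_car A C) : Prop :=
  forall (B : Type) (phi : ip_car A B),
    exists f : B -> C, ip_iso A B phi (ip_re A B C f iota).

Definition discrete (A : IndexedPreorder) (I : Type) (delta : ip_car A I) : Prop :=
  forall (K J : Type) (e : K -> J) (f : K -> I) (phi : ip_car A J),
    (forall j : J, exists k : K, e k = j) ->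
    ip_le A K (ip_re A K J e phi) (ip_re A K I f delta) ->
    exists g : J -> I, forall k : K, g (e k) = f k.

Definition has_discrete_generic (A : IndexedPreorder) : Prop :=
  exists (C : Type) (iota : ip_car A C), generic A C iota /\ discrete A C iota.

Definition rel_sub {A : Type} (s r : A -> A -> Prop) : Prop :=
  forall a b, s a b -> r a b.
Definition rel_comp {A : Type} (s r : A -> A -> Prop) : A -> A -> Prop :=
  fun a c => exists b, r a b /\ s b c.   (* s ∘ r *)

Definition uniform_preorder (A : Type) (R : (A -> A -> Prop) -> Prop) : Prop :=
  R (fun a b => a = b) /\
  (forall r s, R r -> R s -> R (rel_comp s r)) /\
  (forall r s, R r -> rel_sub s r -> R s).

Definition DCO (A : Type) (R : (A -> A -> Prop) -> Prop) : Prop :=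
  uniform_preorder A R /\
  (forall r, R r -> forall a b c, r a b -> r a c -> b = c).

Definition graph_rel {I A : Type} (phi psi : I -> A) : A -> A -> Prop :=
  fun a b => exists i, phi i = a /\ psi i = b.

Definition fam_le (A : Type) (R : (A -> A -> Prop) -> Prop) (I : Type)
  (phi psi : I -> A) : Prop := R (graph_rel phi psi).

Definition fam (A : Type) (R : (A -> A -> Prop) -> Prop)
  (H : uniform_preorder A R) : IndexedPreorder.
Proof.
  destruct H as [Hid [Hcomp Hsub]].
  refine {| ip_car := fun I => I -> A;
            ip_le := fam_le A R;
            ip_re := fun I J u phi => fun i => phi (u i) |}.
  - intros I x. apply (Hsub _ _ Hid). intros a b [i [<- <-]]. reflexivity.
  - intros I x y z Hxy Hyz. apply (Hsub _ _ (Hcomp _ _ Hxy Hyz)).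
    intros a c [i [<- <-]]. exists (y i). split; exists i; auto.
  - intros I J u x y Hxy. apply (Hsub _ _ Hxy).
    intros a b [i [<- <-]]. exists (u i); auto.
  - intros I x; split; apply (Hsub _ _ Hid); intros a b [i [<- <-]]; reflexivity.
  - intros I J K u v x; split; apply (Hsub _ _ Hid); intros a b [i [<- <-]]; reflexivity.
Defined.

(* Main.v *)
Require Import Defs.
From Stdlib Require Import ClassicalEpsilon FunctionalExtensionality ProofIrrelevance.

Section Aux.
Variable A : IndexedPreorder.
Lemma iso_refl I (x : ip_car A I) : ip_iso A I x x.
Proof. split; apply ip_refl. Qed.
Lemma iso_sym I (x y : ip_car A I) : ip_iso A I x y -> ip_iso A I y x.
Proof. intros [a b]; split; auto. Qed.
Lemma iso_trans I (x y z : ip_car A I) : ip_iso A I x y -> ip_iso A I y z -> ip_iso A I x z.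
Proof. intros [a b] [c d]; split; eapply ip_trans; eauto. Qed.
Lemma re_iso I J (u : I -> J) (x y : ip_car A J) : ip_iso A J x y ->
  ip_iso A I (ip_re A I J u x) (ip_re A I J u y).
Proof. intros [a b]; split; apply ip_re_mono; auto. Qed.
Lemma re_comp_iso I J K (u : I -> J) (v : J -> K) (x : ip_car A K) :
  ip_iso A I (ip_re A I K (fun i => v (u i)) x) (ip_re A I J u (ip_re A J K v x)).
Proof. apply ip_re_comp. Qed.
End Aux.

Lemma pn_iso A B (F : PseudoNat A B) I (x y : ip_car A I) :
  ip_iso A I x y -> ip_iso B I (pn_map F I x) (pn_map F I y).
Proof. intros [a b]; split; apply pn_mono; auto. Qed.

Lemma forward (A : IndexedPreorder) X R (D : DCO X R) :
  ip_equivalent A (fam X R (proj1 D)) -> has_discrete_generic A.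
Proof.
  pose proof (proj2 D) as Hsv. generalize (proj1 D) as H. intros [Hid [Hc Hs]].
  set (P := fam X R _).
  intros [F [G [hGF hFG]]].
  pose (idX := (fun x : X => x) : ip_car P X).
  exists X, (pn_map G X idX). split.
  - intros B phi. exists (pn_map F B phi).
    eapply iso_trans. apply iso_sym, hGF.
    eapply iso_trans; [| apply (pn_nat _ _ G)].
    apply pn_iso. apply (iso_refl P).
  - intros K J e f phi surj H.
    assert (H1 := pn_mono _ _ F _ _ _ H).
    assert (H2 : ip_le P K (ip_re P K J e (pn_map F J phi)) (ip_re P K X f idX)).
    { eapply (ip_trans P _ _ _ _ (proj2 (pn_nat _ _ F K J e phi))).
      eapply (ip_trans P _ _ _ _ H1).
      eapply (ip_trans P _ _ _ _ (proj1 (pn_nat _ _ F K X f (pn_map G X idX)))).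
      exact (ip_re_mono P K X f _ _ (proj1 (hFG X idX))). }
    unfold idX in H2. change (R (graph_rel (fun k => pn_map F J phi (e k)) (fun k => f k))) in H2.
    exists (fun j => f (proj1_sig (constructive_indefinite_description _ (surj j)))).
    intros k. destruct (constructive_indefinite_description _ (surj (e k))) as [k' Hk']; simpl.
    eapply (Hsv _ H2).
    + exists k'. split; reflexivity.
    + exists k. rewrite Hk'. split; reflexivity.
Qed.

Section Back.
Variable A : IndexedPreorder.
Variable C : Type.
Variable iota : ip_car A C.
Hypothesis Hgen : generic A C iota.
Hypothesis Hdisc : discrete A C iota.

Definition Rr (r : C -> C -> Prop) : Prop :=
  exists (B : Type) (phi psi : B -> C),
    ip_le A B (ip_re A B C phi iota) (ip_re A B C psi iota) /\ rel_sub r (graph_rel phi psi).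

Lemma Rr_up : uniform_preorder C Rr.
Proof.
  split; [|split].
  - exists C, (fun c => c), (fun c => c). split. apply ip_refl.
    intros a b <-. exists a. auto.
  - intros r s [B1 [f1 [g1 [l1 s1]]]] [B2 [f2 [g2 [l2 s2]]]].
    set (B3 := {p : B1 * B2 | g1 (fst p) = f2 (snd p)}).
    set (q1 := fun p : B3 => fst (proj1_sig p)).
    set (q2 := fun p : B3 => snd (proj1_sig p)).
    exists B3, (fun p => f1 (q1 p)), (fun p => g2 (q2 p)). split.
    + assert (E : (fun p => g1 (q1 p)) = (fun p => f2 (q2 p))).
      { apply functional_extensionality. intros p. exact (proj2_sig p). }
      eapply ip_trans. apply (proj1 (ip_re_comp A B3 B1 C q1 f1 iota)).
      eapply ip_trans. apply (ip_re_mono A B3 B1 q1 _ _ l1).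
      eapply ip_trans. apply (proj2 (ip_re_comp A B3 B1 C q1 g1 iota)).
      rewrite E.
      eapply ip_trans. apply (proj1 (ip_re_comp A B3 B2 C q2 f2 iota)).
      eapply ip_trans. apply (ip_re_mono A B3 B2 q2 _ _ l2).
      apply (proj2 (ip_re_comp A B3 B2 C q2 g2 iota)).
    + intros a c [b [rab sbc]].
      destruct (s1 _ _ rab) as [i1 [h1 h1']].
      destruct (s2 _ _ sbc) as [i2 [h2 h2']].
      assert (Hp : g1 (fst (i1, i2)) = f2 (snd (i1, i2))) by (simpl; congruence).
      exists (exist _ (i1, i2) Hp). unfold q1, q2; simpl. auto.
  - intros r s [B [f [g [l h]]]] Hsr. exists B, f, g. split; auto.
    intros a b Hab. apply h, Hsr, Hab.
Qed.

Lemma Rr_sv : forall r, Rr r -> forall a b c, r a b -> r a c -> b = c.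
Proof.
  intros r [B [f [g [l h]]]] a b c rab rac.
  destruct (h _ _ rab) as [i [hi hi']].
  destruct (h _ _ rac) as [i' [hj hj']].
  set (J := {x : C | exists i, f i = x}).
  set (e := fun i => exist (fun x => exists i, f i = x) (f i) (ex_intro _ i eq_refl) : J).
  assert (Hs : forall j : J, exists k, e k = j).
  { intros [x [k <-]]. exists k. unfold e. apply subset_eq_compat. reflexivity. }
  assert (Hl : ip_le A B (ip_re A B J e (ip_re A J C (@proj1_sig _ _) iota)) (ip_re A B C g iota)).
  { eapply ip_trans. apply (proj2 (ip_re_comp A B J C e (@proj1_sig _ _) iota)). exact l. }
  destruct (Hdisc B J e g _ Hs Hl) as [gg Hgg].
  assert (E : e i = e i'). { unfold e. apply subset_eq_compat. congruence. }
  rewrite <- hi', <- hj', <- !Hgg, E. reflexivity.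
Qed.
End Back.

Section Equiv.
Variable A : IndexedPreorder.
Variable C : Type.
Variable iota : ip_car A C.
Hypothesis Hgen : generic A C iota.

Definition Fm I (phi : ip_car A I) : I -> C :=
  proj1_sig (constructive_indefinite_description _ (Hgen I phi)).
Lemma Fspec I phi : ip_iso A I phi (ip_re A I C (Fm I phi) iota).
Proof. unfold Fm. destruct (constructive_indefinite_description _ _); simpl; auto. Qed.

Lemma equiv_fam (H : uniform_preorder C (Rr A C iota)) : ip_equivalent A (fam C (Rr A C iota) H).
Proof.
  destruct H as [h1 [h2 h3]].
  set (P := fam C (Rr A C iota) (conj h1 (conj h2 h3))).
  unshelve eexists (Build_PseudoNat A P (fun I phi => (Fm I phi : ip_car P I)) _ _).
  { intros I x y Hxy. exists I, (Fm I x), (Fm I y). split; [| intros a b h; exact h].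
    eapply ip_trans. apply (proj2 (Fspec I x)). eapply ip_trans. apply Hxy. apply (proj1 (Fspec I y)). }
  { intros I J u x. split.
    - exists I, (Fm I (ip_re A I J u x)), (fun i => Fm J x (u i)). split; [| intros a b h; exact h].
      eapply ip_trans. apply (proj2 (Fspec I _)).
      eapply ip_trans. apply (ip_re_mono A I J u _ _ (proj1 (Fspec J x))).
      apply (proj2 (ip_re_comp A I J C u (Fm J x) iota)).
    - exists I, (fun i => Fm J x (u i)), (Fm I (ip_re A I J u x)). split; [| intros a b h; exact h].
      eapply ip_trans. apply (proj1 (ip_re_comp A I J C u (Fm J x) iota)).
      eapply ip_trans. apply (ip_re_mono A I J u _ _ (proj2 (Fspec J x))).
      apply (proj1 (Fspec I _)). }
  unshelve eexists (Build_PseudoNat P A (fun I (f : ip_car P I) => ip_re A I C f iota) _ _).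
  { intros I f g [B [p [q [l hs]]]].
    assert (Hx : forall i, exists b, p b = f i /\ q b = g i).
    { intros i. apply hs. exists i. auto. }
    set (h := fun i => proj1_sig (constructive_indefinite_description _ (Hx i))).
    assert (Ef : f = fun i => p (h i)).
    { apply functional_extensionality; intros i. unfold h.
      destruct (constructive_indefinite_description _ _) as [b [? ?]]; simpl; auto. }
    assert (Eg : g = fun i => q (h i)).
    { apply functional_extensionality; intros i. unfold h.
      destruct (constructive_indefinite_description _ _) as [b [? ?]]; simpl; auto. }
    change (ip_le A I (ip_re A I C f iota) (ip_re A I C g iota)).
    rewrite Ef, Eg.
    eapply ip_trans. apply (proj1 (ip_re_comp A I B C h p iota)).
    eapply ip_trans. apply (ip_re_mono A I B h _ _ l).
    apply (proj2 (ip_re_comp A I B C h q iota)). }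
  { intros I J u x. apply (ip_re_comp A I J C u x iota). }
  split.
  - intros I x. simpl. apply iso_sym, Fspec.
  - intros I f. simpl. split.
    + exists I, (Fm I (ip_re A I C f iota)), f. split; [| intros a b h; exact h].
      apply (proj2 (Fspec I _)).
    + exists I, f, (Fm I (ip_re A I C f iota)). split; [| intros a b h; exact h].
      apply (proj1 (Fspec I _)).
Qed.
End Equiv.

Theorem corollary8p4 (A : IndexedPreorder) :
  (exists (X : Type) (R : (X -> X -> Prop) -> Prop) (D : DCO X R),
      ip_equivalent A (fam X R (proj1 D)))
  <-> has_discrete_generic A.
Proof.
  split.
  - intros [X [R [D H]]]. exact (forward A X R D H).
  - intros [C [iota [Hg Hd]]].
    exists C, (Rr A C iota), (conj (Rr_up A C iota) (Rr_sv A C iota Hd)).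
    apply equiv_fam. exact Hg.
Qed.
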